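(* Let $E$ be a regular biordered set satisfying: (E1) there exists $0\in E$ with $0\,\omega\,e$ for every $e\in E$; (E2) there is a map $e\mapsto e'$ on $E$ such that for all $e,f\in E$: (i) $(e')'=e$; (ii) $f\,\omega^l\,e$ iff $e'\,\omega^r\,f'$; (iii) $f\,\omega^l\,e'$ iff $M(f,e)=\{0\}$. Let $S$ be a regular semigroup generated by its idempotents whose biordered set of idempotents is $E$. Then for each $e\in E$, $\{x\in S: xe=0\}=Se'$ and $\{x\in S: ex=0\}=e'S$.
   Context: For a semigroup $S$, its biordered set is the set of idempotents with product $ef$ (computed in $S$) defined when $\{ef,fe\}\cap\{e,f\}\ne\emptyset$. A semigroup is regular if for every $x$ there is $y$ with $xyx=x$; a regular biordered set is one isomorphic to the biordered set of some regular semigroup. In $E$: $\omega^l=\{(e,f): ef=e\}$, $\omega^r=\{(e,f): fe=e\}$, $\omega=\omega^l\cap\omega^r$, $M(e,f)=\{g\in E: g\,\omega^l\,e,\ g\,\omega^r\,f\}$. Here $0$ denotes the element of $E$ given by (E1). *)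

(* Defs.v *)
(* a semigroup is a carrier type S with an associative binary
   operation [mul]; its biordered set E(S) is the set of idempotents. *)

Section SG.
Variable S : Type.
Variable mul : S -> S -> S.

Definition idem (e : S) : Prop := mul e e = e.

Definition omega_l (e f : S) : Prop := mul e f = e.
Definition omega_r (e f : S) : Prop := mul f e = e.
Definition omega (e f : S) : Prop := omega_l e f /\ omega_r e f.

Definition Mset (e f : S) (g : S) : Prop := idem g /\ omega_l g e /\ omega_r g f.

Definition regular_semigroup : Prop := forall x, exists y, mul (mul x y) x = x.

Inductive idem_product : S -> Prop :=
| ip_idem : forall e, idem e -> idem_product e
| ip_mul : forall x e, idem_product x -> idem e -> idem_product (mul x e).

Definition idempotent_generated : Prop := forall x, idem_product x.
End SG.

Arguments idem {S} mul e.
Arguments omega_l {S} mul e f.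
Arguments omega_r {S} mul e f.
Arguments omega {S} mul e f.
Arguments Mset {S} mul e f g.
Arguments regular_semigroup {S} mul.
Arguments idempotent_generated {S} mul.

(* Main.v *)
Require Import Defs.
From Stdlib Require Import Setoid.

Theorem lemma3p3 (S : Type) (mul : S -> S -> S)
  (massoc : forall x y z, mul x (mul y z) = mul (mul x y) z)
  (hreg : regular_semigroup mul)
  (hgen : idempotent_generated mul)
  (zero : S) (hzero : idem mul zero)
  (E1 : forall e, idem mul e -> omega mul zero e)
  (pr : S -> S) (hpr : forall e, idem mul e -> idem mul (pr e))
  (E2i : forall e, idem mul e -> pr (pr e) = e)
  (E2ii : forall e f, idem mul e -> idem mul f ->
            (omega_l mul f e <-> omega_r mul (pr e) (pr f)))
  (E2iii : forall e f, idem mul e -> idem mul f ->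
            (omega_l mul f (pr e) <-> (forall g, Mset mul f e g <-> g = zero))) :
  forall e, idem mul e ->
    (forall x, mul x e = zero <-> exists y, x = mul y (pr e)) /\
    (forall x, mul e x = zero <-> exists y, x = mul (pr e) y).
Proof.
  intros e he.
  assert (Z : forall y, mul zero y = zero /\ mul y zero = zero).
  { intro y; induction (hgen y) as [a ha | a b _ [IH1 IH2] hb].
    - apply (E1 a ha).
    - destruct (E1 b hb) as [H1 H2]. unfold omega_l, omega_r in *. split.
      + rewrite massoc, IH1; exact H1.
      + rewrite <- massoc, H2; exact IH2. }
  assert (K : forall a, idem mul a -> mul (pr a) a = zero).
  { intros a ha.
    assert (hpa := hpr a ha).
    unfold idem in ha, hpa.
    set (c := mul (pr a) a).
    destruct (hreg c) as [y Hy].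
    set (x := mul (mul y c) y).
    assert (Hcxc : mul (mul c x) c = c).
    { unfold x. rewrite !massoc, Hy, Hy. reflexivity. }
    assert (HyL : forall z, mul (mul (mul z c) y) c = mul z c).
    { intro z. rewrite <- !massoc, (massoc c y c), Hy. reflexivity. }
    assert (Hxcx : mul (mul x c) x = x).
    { unfold x. rewrite !massoc, !HyL. reflexivity. }
    set (h := mul (mul a x) (pr a)).
    assert (Hh : h = zero).
    { apply (proj1 (E2iii a (pr a) ha hpa) hpa h). unfold Mset, idem, omega_l, omega_r.
      split; [| split].
      - unfold h. rewrite !massoc. rewrite <- (massoc (mul a x) (pr a) a). fold c.
        rewrite <- (massoc a x c), <- (massoc a (mul x c) x), Hxcx. reflexivity.
      - unfold h. rewrite <- massoc, hpa. reflexivity.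
      - unfold h. rewrite !massoc, ha. reflexivity. }
    assert (Hc : mul (mul (pr a) h) a = c).
    { unfold h. rewrite !massoc. fold c.
      rewrite <- (massoc (mul c x) (pr a) a). fold c. exact Hcxc. }
    rewrite Hh in Hc. rewrite (proj2 (Z (pr a))), (proj1 (Z a)) in Hc.
    symmetry; exact Hc. }
  assert (hpe := hpr e he).
  assert (K1 : mul (pr e) e = zero) by exact (K e he).
  assert (K2 : mul e (pr e) = zero).
  { rewrite <- (E2i e he) at 1. apply K; exact hpe. }
  split; intro x; split.
  - intro Hx. destruct (hreg x) as [x' Hx'].
    set (f := mul x' x).
    assert (hf : idem mul f).
    { unfold idem, f. rewrite <- massoc, (massoc x x' x), Hx'. reflexivity. }
    assert (hfe : mul f e = zero).
    { unfold f. rewrite <- massoc, Hx. apply Z. }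
    assert (Hfe' : omega_l mul f (pr e)).
    { apply (proj2 (E2iii e f he hf)). intro g; split.
      - intros [hg [g1 g2]]. unfold idem, omega_l, omega_r in *.
        rewrite <- hg. rewrite <- g1 at 1. rewrite <- g2.
        rewrite <- massoc. rewrite (massoc f e g), hfe. rewrite (proj1 (Z g)). apply Z.
      - intros ->. unfold Mset, idem, omega_l, omega_r. split; [exact hzero|].
        split; [apply Z | apply Z]. }
    assert (Hxf : mul x f = x) by (unfold f; rewrite massoc; exact Hx').
    exists x. unfold omega_l in Hfe'. rewrite <- Hxf. rewrite <- massoc, Hfe'. reflexivity.
  - intros [y ->]. rewrite <- massoc, K1. apply Z.
  - intro Hx. destruct (hreg x) as [x' Hx'].
    set (f := mul x x').
    assert (hf : idem mul f).
    { unfold idem, f. rewrite massoc, Hx'. reflexivity. }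
    assert (hfe : mul e f = zero).
    { unfold f. rewrite massoc, Hx. apply Z. }
    assert (hpf := hpr f hf).
    assert (H1 : omega_l mul e (pr f)).
    { apply (proj2 (E2iii f e hf he)). intro g; split.
      - intros [hg [g1 g2]]. unfold idem, omega_l, omega_r in *.
        rewrite <- hg. rewrite <- g1 at 1. rewrite <- g2.
        rewrite <- massoc. rewrite (massoc e f g), hfe. rewrite (proj1 (Z g)). apply Z.
      - intros ->. unfold Mset, idem, omega_l, omega_r. split; [exact hzero|].
        split; [apply Z | apply Z]. }
    assert (H2 := proj1 (E2ii (pr f) e hpf he) H1).
    rewrite (E2i f hf) in H2. unfold omega_r in H2.
    assert (Hxf : mul f x = x) by (unfold f; exact Hx').
    exists x. rewrite <- Hxf. rewrite massoc, H2. reflexivity.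
  - intros [y ->]. rewrite massoc, K2. apply Z.
Qed.
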